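(* Let $p,q\geq 0$ be integers and let $M$ be a $(p+q)\times(p+q)$ complex matrix with $M=M^*$ and $M^*I_{p,q}M=I_{p,q}$. Then \[ \operatorname{rank}(M-I_{p,q})+\operatorname{rank}(M+I_{p,q})\leq p+q. \]
   Context: $I_{p,q}=\mathrm{diag}\{I_p,-I_q\}$, where $I_p$ is the $p\times p$ identity matrix; $M^*$ denotes the conjugate transpose of $M$. The set of such $M$ is denoted $\mathbf{U}_s(p,q)$ (self-adjoint elements of the pseudo-unitary group $\mathbf{U}(p,q)=\{M\in\mathbf{GL}(p+q,\mathbb{C}):M^*I_{p,q}M=I_{p,q}\}$). *)

(* Defs.v *)
From mathcomp Require Import all_boot all_order all_algebra all_field.
Set Implicit Arguments. Unset Strict Implicit. Unset Printing Implicit Defensive.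
Import GRing.Theory Num.Theory.
Local Open Scope ring_scope.

(* Complex numbers are modelled by algC (algebraically closed field of
   characteristic 0 with complex conjugation). *)

Definition adjmx (m n : nat) (M : 'M[algC]_(m, n)) : 'M[algC]_(n, m) :=
  (map_mx (fun z : algC => z^*) M)^T.

Definition Ipq (p q : nat) : 'M[algC]_(p + q) :=
  block_mx 1%:M 0 0 (- 1%:M).

(* Main.v *)
Require Import Defs.
From mathcomp Require Import all_boot all_order all_algebra all_field.
Import GRing.Theory.
Local Open Scope ring_scope.

Theorem corollary3p3 (p q : nat) (M : 'M[algC]_(p + q)) :
  adjmx M = M ->
  adjmx M *m Ipq p q *m M = Ipq p q ->
  (\rank (M - Ipq p q)%R + \rank (M + Ipq p q)%R <= p + q)%N.
Proof.
move=> hA; rewrite hA => hM.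
set J := Ipq p q in hM *.
have JJ : J *m J = 1%:M.
  rewrite /J /Ipq mulmx_block !mul1mx !mul0mx !mulmx0 !addr0 !add0r.
  by rewrite mulmxN mulNmx mulmx1 opprK scalar_mx_block.
have Ju : J \in unitmx by case: (mulmx1_unit JJ).
have rf : row_free J by rewrite row_free_unit.
set A := M *m J.
have AA : A *m A = 1%:M by rewrite /A mulmxA hM JJ.
have e1 : M - J = (A - 1%:M) *m J.
  by rewrite mulmxBl mul1mx /A -mulmxA JJ mulmx1.
have e2 : M + J = (A + 1%:M) *m J.
  by rewrite mulmxDl mul1mx /A -mulmxA JJ mulmx1.
rewrite e1 e2 !mxrankMfree //.
have k : (A - 1%:M <= kermx (A + 1%:M))%MS.
  rewrite sub_kermx mulmxBl mulmxDr AA mul1mx mulmx1.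
  by rewrite opprD addrA addrK subrr.
have := mxrankS k; rewrite mxrank_ker.
have := rank_leq_col (A + 1%:M).
move: (\rank (A - 1%:M)) (\rank (A + 1%:M)) => a b hb ha; by rewrite addnC -leq_subRL.
Qed.
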